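(* Let $\mathbb{X},\mathbb{Y}$ be real Banach spaces and let $T:\mathbb{X}\to\mathbb{Y}$ be a bounded linear operator that preserves Birkhoff–James orthogonality at a point $x\in\mathbb{X}$. If $Tx$ is a smooth point of $\mathbb{Y}$, then $x$ is a smooth point of $\mathbb{X}$.
   Context: All spaces are real Banach spaces. For $u,v\in\mathbb{X}$, $u$ is Birkhoff–James orthogonal to $v$, written $u\perp_B v$, if $\|u+\lambda v\|\ge\|u\|$ for all $\lambda\in\mathbb{R}$. A bounded linear operator $T$ preserves Birkhoff–James orthogonality at $x$ if for all $v\in\mathbb{X}$, $x\perp_B v$ implies $Tx\perp_B Tv$. For non-zero $z$, $J(z)=\{f\in\mathbb{X}^*:\|f\|=1,\ f(z)=\|z\|\}$; a non-zero $z$ is smooth if $J(z)$ is a singleton (equivalently $\dim\operatorname{span}J(z)=1$). *)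

(* Defs.v *)
From HB Require Import structures.
From mathcomp Require Import all_boot all_order all_algebra.
From mathcomp Require Import all_classical all_reals all_analysis.
Set Implicit Arguments. Unset Strict Implicit. Unset Printing Implicit Defensive.
Import Order.TTheory GRing.Theory Num.Theory.
Import numFieldNormedType.Exports.
Local Open Scope ring_scope.
Local Open Scope classical_set_scope.

Section BJ.
Variable R : realType.

Definition is_linear (U V : normedModType R) (f : U -> V) : Prop :=
  forall (a : R) (u v : U), f (a *: u + v) = a *: f u + f v.

Definition bounded_linear (U V : normedModType R) (T : U -> V) : Prop :=
  is_linear T /\ exists M : R, forall u : U, `|T u| <= M * `|u|.

Definition BJ_orth (U : normedModType R) (u v : U) : Prop :=
  forall lambda : R, `|u| <= `|u + lambda *: v|.

Definition preserves_BJ_at (U V : normedModType R) (T : U -> V) (x : U) : Prop :=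
  forall v : U, BJ_orth x v -> BJ_orth (T x) (T v).

(* f in X^* with operator norm exactly 1:
   1 is a bound for f and every bound M of f satisfies 1 <= M *)
Definition unit_functional (U : normedModType R) (f : U -> R) : Prop :=
  bounded_linear (f : U -> R^o) /\
  (forall u : U, `|f u| <= `|u|) /\
  (forall M : R, (forall u : U, `|f u| <= M * `|u|) -> 1 <= M).

Definition Jset (U : normedModType R) (z : U) : set (U -> R) :=
  [set f | unit_functional f /\ f z = `|z|].

Definition smooth_point (U : normedModType R) (z : U) : Prop :=
  z != 0 /\ exists f : U -> R, Jset z = [set f].

End BJ.

(* Main.v *)
Require Import Defs.
From HB Require Import structures.
From mathcomp Require Import all_boot all_order all_algebra.
From mathcomp Require Import all_classical all_reals all_analysis.
From mathcomp Require Import lra.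
Set Implicit Arguments. Unset Strict Implicit. Unset Printing Implicit Defensive.
Import Order.TTheory GRing.Theory Num.Theory.
Import numFieldNormedType.Exports.
Local Open Scope ring_scope.
Local Open Scope classical_set_scope.
Definition gfun (R : realType) (Y : normedModType R) (G : set (Y * R)) :=
  forall y a b, G (y, a) -> G (y, b) -> a = b.
Definition glin (R : realType) (Y : normedModType R) (G : set (Y * R)) :=
  forall l y z a b, G (y, a) -> G (z, b) -> G (l *: y + z, l * a + b).
Definition gdom (R : realType) (Y : normedModType R) (G : set (Y * R)) :=
  forall y a, G (y, a) -> a <= `|y|.

Lemma glin_scale (R : realType) (Y : normedModType R) (G : set (Y * R)) (l : R) (y : Y) (a : R) :
  glin G -> G (0, 0) -> G (y, a) -> G (l *: y, l * a).
Proof. by move=> hl h0 hy; have := hl l _ _ _ _ hy h0; rewrite addr0 addr0. Qed.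

Lemma hb_ext (R : realType) (Y : normedModType R) (A : set (Y * R)) (y0 : Y) :
  gfun A -> glin A -> gdom A -> A (0, 0) -> ~ (exists a, A (y0, a)) ->
  exists B, [/\ gfun B, glin B, gdom B & A `<` B].
Proof.
move=> hf hl hd h0 hy0.
pose S := [set r : R | exists z a, A (z, a) /\ r = a - `|z - y0|].
have ub : forall z a w b, A (z, a) -> A (w, b) -> a - `|z - y0| <= `|w + y0| - b.
  move=> z a w b hz hw.
  have := hd _ _ (hl 1 _ _ _ _ hz hw); rewrite !scale1r !mul1r => h1.
  have h2 : `|z + w| <= `|z - y0| + `|w + y0|.
    have -> : z + w = (z - y0) + (w + y0) by rewrite addrACA addNr addr0.
    exact: ler_normD.
  lra.
pose c := sup S.
have cS : forall z a, A (z, a) -> a - `|z - y0| <= c.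
  move=> z a hz; apply: ub_le_sup; last by exists z, a.
  exists (`|0 + y0| - 0) => r [z' [a' [hz' ->]]]; exact: ub.
have cB : forall w b, A (w, b) -> c <= `|w + y0| - b.
  move=> w b hw; apply: ge_sup.
    by exists (0 - `|0 - y0|); exists 0, 0.
  move=> r [z' [a' [hz' ->]]]; exact: ub.
pose B := [set p : Y * R | exists z a t, A (z, a) /\ p = (z + t *: y0, a + t * c)].
exists B; split.
- move=> y a b [z1 [a1 [t1 [h1 [-> ->]]]]] [z2 [a2 [t2 [h2 [e ->]]]]].
  have [tt|tn] := eqVneq t1 t2.
    subst t2; move/addIr: e => ez; subst z2.
    by rewrite (hf _ _ _ h1 h2).
  exfalso; apply: hy0.
  have e2 : (t1 - t2) *: y0 = z2 - z1.
    rewrite scalerBl -(addrKA z1 (t1 *: y0)) -(addrKA (t2 *: y0) z2 z1).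
    by rewrite (addrC _ z1) e (addrC z1).
  have tn0 : t1 - t2 != 0 by rewrite subr_eq0.
  exists ((t1 - t2)^-1 * (-1 * a1 + a2)).
  have -> : y0 = (t1 - t2)^-1 *: (-1 *: z1 + z2).
    by rewrite scaleN1r (addrC (- z1)) -e2 scalerA mulVf // scale1r.
  apply: glin_scale => //; exact: hl.
- move=> l y z a b [z1 [a1 [t1 [h1 [-> ->]]]]] [z2 [a2 [t2 [h2 [-> ->]]]]].
  exists (l *: z1 + z2), (l * a1 + a2), (l * t1 + t2); split; first exact: hl.
  congr pair.
    by rewrite scalerDr scalerA addrACA -scalerDl.
  rewrite mulrDr mulrA addrACA -mulrDl //.
- move=> y a [z [a' [t [hz [-> ->]]]]].
  have [t0|t0|->] := ltgtP t 0; last by rewrite scale0r mul0r !addr0; exact: hd.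
  +
    pose s := - t.
    have s0 : 0 < s by rewrite /s oppr_gt0.
    have hw := cS _ _ (glin_scale (s^-1) hl h0 hz).
    have en : `|z + t *: y0| = s * `|s^-1 *: z - y0|.
      rewrite -[s in s * _](gtr0_norm s0) -normrZ scalerBr scalerA mulfV ?gt_eqF // scale1r.
      by rewrite /s scaleNr opprK.
    rewrite en.
    have : s * (s^-1 * a' - `|s^-1 *: z - y0|) <= s * c by rewrite ler_pM2l.
    rewrite mulrBr mulrA mulfV ?gt_eqF // mul1r /s; lra.
  + have hw := cB _ _ (glin_scale (t^-1) hl h0 hz).
    have en : `|z + t *: y0| = t * `|t^-1 *: z + y0|.
      rewrite -[t in t * _](gtr0_norm t0) -normrZ scalerDr scalerA mulfV ?gt_eqF // scale1r.
      by [].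
    rewrite en.
    have : t * c <= t * (`|t^-1 *: z + y0| - t^-1 * a') by rewrite ler_pM2l.
    rewrite mulrBr (mulrA t) mulfV ?gt_eqF // mul1r; lra.
- split.
    move=> [z a] hz; exists z, a, 0; split => //.
    by rewrite scale0r mul0r !addr0.
  move=> sub; apply: hy0; exists c; apply: sub; exists 0, 0, 1; split => //.
  by rewrite scale1r mul1r !add0r.
Qed.

Lemma hb (R : realType) (Y : normedModType R) (G0 : set (Y * R)) :
  gfun G0 -> glin G0 -> gdom G0 -> G0 (0, 0) ->
  exists f : Y -> R, [/\ (forall l u v, f (l *: u + v) = l * f u + f v),
    (forall y, f y <= `|y|) & (forall y a, G0 (y, a) -> f y = a)].
Proof.
move=> f0 l0 d0 z0.
pose P := [set G : set (Y * R) | [/\ gfun G, glin G, gdom G & (G0 `<=` G \/ G = set0)]].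
have [A [[fA lA dA hA] maxA]] : exists A, P A /\ forall B, A `<` B -> ~ P B.
  apply: Zorn_bigcup => F FP tot; split.
  - move=> y a b [X1 FX1 X1a] [X2 FX2 X2b].
    have [s|s] := tot _ _ FX1 FX2.
      by have [f _ _ _] := FP _ FX2; apply: f (s _ X1a) X2b.
    by have [f _ _ _] := FP _ FX1; apply: f X1a (s _ X2b).
  - move=> l y z a b [X1 FX1 X1a] [X2 FX2 X2b].
    have [s|s] := tot _ _ FX1 FX2.
      by have [_ f _ _] := FP _ FX2; exists X2 => //; apply: f (s _ X1a) X2b.
    by have [_ f _ _] := FP _ FX1; exists X1 => //; apply: f X1a (s _ X2b).
  - move=> y a [X FX Xa]; by have [_ _ f _] := FP _ FX; apply: f.
  - have [[X FX [p Xp]]|nX] := pselect (exists2 X, F X & X !=set0).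
      have [_ _ _ [s|e]] := FP _ FX.
        by left => q /s q1; exists X.
      by rewrite e in Xp.
    right; apply/seteqP; split => // p [X FX Xp]; apply: nX; exists X => //; by exists p.
have sA : G0 `<=` A.
  case: hA => // eA; exfalso; apply: (maxA G0); last by split => //; left.
  by rewrite eA; split => // /(_ _ z0).
have full : forall y, exists a, A (y, a).
  move=> y; apply: contrapT => ny.
  have [B [fB lB dB [sAB nBA]]] := hb_ext fA lA dA (sA _ z0) ny.
  apply: (maxA B); first by split.
  split => //; left => p /sA /sAB //.
have [f hf] := choice full.
exists f; split.
- move=> l u v; exact: (fA _ _ _ (hf _) (lA l _ _ _ _ (hf u) (hf v))).
- move=> y; exact: dA.
- move=> y a hy; exact: (fA _ _ _ (hf y) (sA _ hy)).
Qed.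

Lemma support (R : realType) (Y : normedModType R) (y w : Y) :
  y != 0 -> BJ_orth y w -> exists f : Y -> R, Jset y f /\ f w = 0.
Proof.
move=> y0 bj.
have ny : 0 < `|y| by rewrite normr_gt0.
have key : forall a b : R, `|a| * `|y| <= `|a *: y + b *: w|.
  move=> a b; have [->|a0] := eqVneq a 0.
    by rewrite normr0 mul0r.
  have -> : a *: y + b *: w = a *: (y + (a^-1 * b) *: w).
    by rewrite scalerDr scalerA mulrA mulfV // mul1r.
  by rewrite normrZ ler_pM2l ?normr_gt0 //; apply: bj.
pose G0 := [set p : Y * R | exists a b : R, p = (a *: y + b *: w, a * `|y|)].
have [f [fl fd fe]] : exists f : Y -> R, [/\ (forall l u v, f (l *: u + v) = l * f u + f v),
    (forall y, f y <= `|y|) & (forall y a, G0 (y, a) -> f y = a)].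
  apply: hb.
  - move=> u a b [a1 [b1 [-> ->]]] [a2 [b2 [e ->]]].
    have e2 : (a1 - a2) *: y + (b1 - b2) *: w = 0.
      by rewrite !scalerBl addrACA -opprD e subrr.
    have := key (a1 - a2) (b1 - b2); rewrite e2 normr0 => h.
    have : `|a1 - a2| * `|y| = 0.
      by apply/eqP; rewrite eq_le h mulr_ge0.
    move/eqP; rewrite mulf_eq0 normr_eq0 (gt_eqF ny) orbF subr_eq0 => /eqP -> //.
  - move=> l u v a b [a1 [b1 [-> ->]]] [a2 [b2 [-> ->]]].
    exists (l * a1 + a2), (l * b1 + b2); congr pair.
      by rewrite scalerDr !scalerA addrACA -!scalerDl.
    by rewrite mulrDl mulrA.
  - move=> u a [a1 [b1 [-> ->]]].
    apply: le_trans (key a1 b1); apply: ler_wpM2r; [exact: normr_ge0 | exact: ler_norm].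
  - by exists 0, 0; rewrite !scale0r addr0 mul0r.
have fy : f y = `|y| by apply: fe; exists 1, 0; rewrite scale1r scale0r addr0 mul1r.
have fw : f w = 0 by apply: fe; exists 0, 1; rewrite scale0r scale1r add0r mul0r.
have f0 : f 0 = 0 by apply: fe; exists 0, 0; rewrite !scale0r addr0 mul0r.
have fn : forall u, `|f u| <= `|u|.
  move=> u; rewrite ler_norml fd andbT.
  have : f (-1 *: u + 0) <= `|-1 *: u + 0| by apply: fd.
  rewrite fl f0 !addr0 scaleN1r normrN; lra.
exists f; split => //; split => //; split.
- split; first by move=> l u v; exact: fl.
  by exists 1 => u; rewrite mul1r.
- split => // M hM.
  have := hM y; rewrite fy ger0_norm ?normr_ge0 // => h.
  by rewrite -(ler_pM2r ny) mul1r.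
Qed.

Lemma J_lin (R : realType) (U : normedModType R) (z : U) (f : U -> R) :
  Jset z f -> forall l u v, f (l *: u + v) = l * f u + f v.
Proof. by move=> [[[hl _] _] _] l u v; rewrite hl. Qed.

Lemma J_bd (R : realType) (U : normedModType R) (z : U) (f : U -> R) :
  Jset z f -> forall u, `|f u| <= `|u|.
Proof. by move=> [[_ [h _]] _]. Qed.

Lemma J_val (R : realType) (U : normedModType R) (z : U) (f : U -> R) :
  Jset z f -> f z = `|z|.
Proof. by move=> [_ h]. Qed.

Unset Implicit Arguments.

Theorem mainTheorem1 (R : realType) (X Y : completeNormedModType R)
  (T : X -> Y) (x : X) :
  bounded_linear T -> preserves_BJ_at T x ->
  smooth_point (T x) -> smooth_point x.
Proof.
move=> [Tl _] pres [Tx0 [g hg]].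
have T0 : T 0 = 0.
  have := Tl 1 0 0; rewrite !scale1r addr0 => /(congr1 (fun z => z - T 0)) /=.
  by rewrite subrr addrK => <-.
have x0 : x != 0 by apply/eqP => e; move: Tx0; rewrite e T0 eqxx.
have gJ : Jset (T x) g by rewrite hg.
have nx : 0 < `|x| by rewrite normr_gt0.
have nTx : 0 < `|T x| by rewrite normr_gt0.
have det : forall f, Jset x f -> forall u, g (T u) = f u / `|x| * `|T x|.
  move=> f fJ u.
  pose k := f u / `|x|.
  pose v := (- k) *: x + u.
  have fv : f v = 0.
    rewrite /v (J_lin fJ) (J_val fJ) /k mulNr -mulrA mulVf ?gt_eqF // mulr1.
    by rewrite addNr.
  have bj : BJ_orth x v.
    move=> l; rewrite -(J_val fJ); apply: le_trans (J_bd fJ _).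
    by rewrite addrC (J_lin fJ) fv mulr0 add0r ler_norm.
  have [h [hJ hv]] := support Tx0 (pres _ bj).
  have hg' : h = g by have := hJ; rewrite hg.
  move: hv; rewrite hg' /v Tl (J_lin gJ) (J_val gJ) -/k.
  move=> e; lra.
have bj0 : BJ_orth x 0 by move=> l; rewrite scaler0 addr0.
have [f1 [f1J _]] := support x0 bj0.
split => //; exists f1; apply/seteqP; split => f2 //=; last by move=> ->.
move=> f2J; apply/funext => u.
have e := det _ f1J u; rewrite (det _ f2J u) in e.
have nx0 : `|x| != 0 by rewrite gt_eqF.
have nTx0 : `|T x| != 0 by rewrite gt_eqF.
move/(mulIf nTx0)/(mulIf (invr_neq0 nx0)): e => ->.
by [].
Qed.
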